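(* For every $k\ge1$ and every $n\ge1$, the families $\mathrm{SLT}_k$ and $\mathrm{RL}_n^P$ are incomparable (neither is contained in the other).
   Context: Strictly locally testable languages: let $V$ be an alphabet and $k\ge1$. For $B,I,E\subseteq V^k$ and $F\subseteq V^{\le k-1}$, $\mathrm{slt}(B,I,E,F)$ is the language over $V$ consisting of all words in $F$ together with all words $a_1\cdots a_n$ ($a_i\in V$, $n\ge k$) with $a_1\cdots a_k\in B$, $a_{j+1}\cdots a_{j+k}\in I$ for all $1\le j\le n-k-1$, and $a_{n-k+1}\cdots a_n\in E$. $\mathrm{SLT}_k$ is the family of languages of this form. A right-linear grammar is $G=(N,T,P,S)$ with rules $A\to wB$ or $A\to w$ ($A,B\in N$, $w\in T^*$). For a regular language $L$, $\mathrm{Prod}_{RL}(L)$ is the minimum of $|P|$ over all right-linear grammars generating $L$; $\mathrm{RL}_n^P=\{L\text{ regular}:\mathrm{Prod}_{RL}(L)\le n\}$. *)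

(* Defs.v *)
From mathcomp Require Import all_boot.
Set Implicit Arguments. Unset Strict Implicit. Unset Printing Implicit Defensive.

Definition language (V : finType) := seq V -> Prop.

(* slt(B,I,E,F): words in F, plus words a_1..a_n (n >= k) whose prefix of
   length k is in B, whose factors a_{j+1}..a_{j+k} for 1 <= j <= n-k-1 are
   in I, and whose suffix of length k is in E. *)
Definition slt (V : finType) (k : nat) (B I E F : seq V -> Prop) : language V :=
  fun w =>
    F w \/
    [/\ k <= size w,
        B (take k w),
        (forall j, 1 <= j <= size w - k - 1 -> I (take k (drop j w)))
      & E (drop (size w - k) w)].

Definition SLT (V : finType) (k : nat) (L : language V) : Prop :=
  exists B I E F : seq V -> Prop,
    [/\ (forall w, B w -> size w = k),
        (forall w, I w -> size w = k),
        (forall w, E w -> size w = k),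
        (forall w, F w -> size w <= k - 1)
      & forall w, L w <-> slt k B I E F w].

(* Right-linear grammars with nonterminal type N and terminal alphabet V.
   A rule (A, w, Some B) is A -> wB, a rule (A, w, None) is A -> w. *)
Definition rl_rule (N V : Type) := (N * seq V * option N)%type.

Record rl_grammar (V : finType) := RLGrammar {
  rl_N : finType;
  rl_P : seq (rl_rule rl_N V);
  rl_P_uniq : uniq rl_P;
  rl_S : rl_N
}.

Inductive derives (V : finType) (G : rl_grammar V) : rl_N G -> seq V -> Prop :=
  | der_term A u : (A, u, None) \in rl_P G -> @derives V G A u
  | der_step A u B v : (A, u, Some B) \in rl_P G -> @derives V G B v ->
                       @derives V G A (u ++ v).

Definition rl_lang (V : finType) (G : rl_grammar V) : language V :=
  @derives V G (rl_S G).

Definition nprod (V : finType) (G : rl_grammar V) : nat := size (rl_P G).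

Definition RLP (V : finType) (n : nat) (L : language V) : Prop :=
  exists G : rl_grammar V, nprod G <= n /\ forall w, L w <-> rl_lang G w.

(* Main.v *)
Require Import Defs.
From mathcomp Require Import all_boot zify.
Set Implicit Arguments. Unset Strict Implicit. Unset Printing Implicit Defensive.

Lemma der_single (V : finType) (G : rl_grammar V) A w :
  @derives V G A w -> forall a, w = [:: a] ->
  exists r, r \in rl_P G /\ r.1.2 = [:: a].
Proof.
elim=> [B u Hu|B u C v Hu _ IH] a Ew.
  by exists (B, u, None); subst.
case: u Hu Ew => [|x [|y u]] Hu //= Ew.
  exact: IH.
case: Ew => <- _; by exists (B, [:: x], Some C); split.
Qed.

Lemma part1 (k n : nat) : 1 <= k ->
  SLT k (fun _ : seq 'I_n.+1 => True) /\ ~ RLP n (fun _ : seq 'I_n.+1 => True).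
Proof.
move=> hk; split.
  exists (fun w => size w = k), (fun w => size w = k), (fun w => size w = k),
    (fun w => size w <= k - 1); split=> // w; split=> // _.
  case: (leqP (size w) (k - 1)) => hw; [by left|right].
  have hkw : k <= size w by lia.
  split=> //.
  - by rewrite size_take_min; apply/minn_idPl.
  - move=> j /andP [_ hj]; rewrite size_take_min size_drop; apply/minn_idPl.
    by rewrite leq_subRL ?leq_subLR; move: hj; rewrite -!subnDA; lia.
  - by rewrite size_drop subKn.
case=> G [hG HL].
pose s := [seq [:: a] | a <- enum 'I_n.+1].
have us : uniq s by rewrite map_inj_uniq ?enum_uniq // => x y [].
have sub : {subset s <= [seq r.1.2 | r <- rl_P G]}.
  move=> w /mapP [a _ ->].
  have [r [hr hr2]] := der_single (proj1 (HL [:: a]) I) (erefl _).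
  by apply/mapP; exists r.
have := uniq_leq_size us sub.
rewrite /s !size_map. rewrite -enumT size_enum_ord /nprod => h.
by have := leq_trans h hG; rewrite ltnn.
Qed.

Definition G2 (k : nat) : rl_grammar unit :=
  @RLGrammar unit unit [:: (tt, nseq k.+2 tt, None)] (erefl _) tt.

Lemma tr (P : seq unit -> Prop) m p : P (nseq m tt) -> m = p -> P (nseq p tt).
Proof. by move=> ? <-. Qed.

Lemma part2 (k n : nat) : 1 <= k -> 1 <= n ->
  RLP n (fun w : seq unit => w = nseq k.+2 tt) /\
  ~ SLT k (fun w : seq unit => w = nseq k.+2 tt).
Proof.
move=> hk hn; split.
  exists (G2 k); split=> // w; split.
    by move=> ->; apply: der_term; rewrite inE.
  case=> [A u|A u B v]; rewrite inE => /eqP //.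
  by case=> _ ->.
case=> B [I [E [F [hB hI hE hF H]]]].
have := proj1 (H (nseq k.+2 tt)) (erefl _).
case=> [/hF|[_ hb hi he]].
  by rewrite size_nseq; lia.
have hi1 := hi 1; rewrite size_nseq in hi1.
have hi1' : I (nseq k tt).
  have := hi1 (ltac:(apply/andP; split; lia)).
  rewrite drop_nseq take_nseq; last lia; move/(tr (P:=I)); apply; lia.
have := proj2 (H (nseq k.+3 tt)).
have : slt k B I E F (nseq k.+3 tt).
  right; split.
  - rewrite size_nseq; lia.
  - move: hb; rewrite !take_nseq; try lia; move/(tr (P:=B)); apply; lia.
  - move=> j /andP [h1 h2]; rewrite size_nseq in h2.
    rewrite drop_nseq take_nseq; last lia; move: hi1'; move/(tr (P:=I)); apply; lia.
  - move: he; rewrite !size_nseq !drop_nseq; move/(tr (P:=E)); apply; lia.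
move=> hs /(_ hs) /(congr1 size); rewrite !size_nseq; lia.
Qed.

Theorem mainTheorem10 (k n : nat) : 1 <= k -> 1 <= n ->
  (exists (V : finType) (L : language V), SLT k L /\ ~ RLP n L) /\
  (exists (V : finType) (L : language V), RLP n L /\ ~ SLT k L).
Proof.
move=> hk hn; split.
  by exists 'I_n.+1, (fun _ => True); apply: part1.
by exists unit, (fun w => w = nseq k.+2 tt); apply: part2.
Qed.
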